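(* Consider equation (E). Assume there exist continuous non-decreasing functions $\sigma_1,\dots,\sigma_m:[t_0,\infty)\to\mathbb{R}$ such that $\tau_i(t)\le\sigma_i(t)\le t$ for all $t\ge t_0$ and $i=1,\dots,m$. For $t\ge t_0$ and $i,j\in\{1,\dots,m\}$ put $$I_{ij}(t)=\int_{\sigma_j(t)}^{t}p_i(s)\exp\Bigg(\int_{\tau_i(s)}^{\sigma_i(t)}\sum_{k=1}^{m}p_k(\xi)\exp\bigg(\int_{\tau_k(\xi)}^{\xi}\sum_{l=1}^{m}p_l(u)\,du\bigg)d\xi\Bigg)ds .$$ If $$\limsup_{t\to+\infty}\prod_{j=1}^{m}\Bigg[\prod_{i=1}^{m}I_{ij}(t)\Bigg]^{1/m}>\frac{1}{m^{m}},$$ then all solutions of (E) oscillate.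
   Context: Equation (E) is $x'(t)+\sum_{i=1}^{m}p_i(t)\,x(\tau_i(t))=0$, $t\ge t_0$, where $m\ge1$ is an integer and, for each $i$, $p_i,\tau_i:[t_0,\infty)\to[0,\infty)$ are continuous, $\tau_i(t)\le t$ for $t\ge t_0$, and $\lim_{t\to\infty}\tau_i(t)=\infty$. Let $\tau(t)=\min_i\tau_i(t)$ and $\tau_{(-1)}(t)=\sup\{s:\tau(s)\le t\}$. A solution of (E) is a function $x\in C([T_0,\infty);\mathbb{R})$ for some $T_0\ge t_0$ which is continuously differentiable on $[\tau_{(-1)}(T_0),\infty)$ and satisfies (E) for $t\ge\tau_{(-1)}(T_0)$. A solution is oscillatory if it has arbitrarily large zeros, and nonoscillatory otherwise; ''all solutions oscillate'' means every solution is oscillatory. *)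

(* Defs.v *)
From Stdlib Require Import Reals Lra Classical ClassicalEpsilon.
Open Scope R_scope.

(* If f is not Riemann integrable on the interval, the value is
   an arbitrary default 0 (this never happens in the relevant range: the
   integrands are continuous there).  RiemannInt is independent of the
   integrability proof (RiemannInt_P5). *)
Definition Rint (f : R -> R) (a b : R) : R :=
  match excluded_middle_informative (exists _ : Riemann_integrable f a b, True) with
  | left H => RiemannInt (proj1_sig (constructive_indefinite_description _ H))
  | right _ => 0
  end.

Fixpoint sumR (n : nat) (f : nat -> R) : R :=
  match n with O => 0 | S k => sumR k f + f k end.
Fixpoint prodR (n : nat) (f : nat -> R) : R :=
  match n with O => 1 | S k => prodR k f * f k end.

Fixpoint minR (n : nat) (f : nat -> R) : R :=
  match n with O => f O | S k => Rmin (minR k f) (f (S k)) end.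

Definition rootR (m : nat) (x : R) : R :=
  if Rle_dec x 0 then 0 else Rpower x (/ INR m).

Definition cont_from (a : R) (f : R -> R) : Prop :=
  forall t, a <= t -> forall eps, 0 < eps -> exists delta, 0 < delta /\
    forall s, a <= s -> Rabs (s - t) < delta -> Rabs (f s - f t) < eps.

Definition deriv_from (a : R) (f : R -> R) (t l : R) : Prop :=
  forall eps, 0 < eps -> exists delta, 0 < delta /\
    forall h, h <> 0 -> Rabs h < delta -> a <= t + h ->
      Rabs ((f (t + h) - f t) / h - l) < eps.

Definition nondecr_from (a : R) (f : R -> R) : Prop :=
  forall s t, a <= s -> s <= t -> f s <= f t.

Definition tends_to_infty (f : R -> R) : Prop :=
  forall M, exists T, forall t, T <= t -> M <= f t.

(* limsup_{t -> +oo} f t > c   (limsup taken in the extended reals) *)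
Definition limsup_gt (f : R -> R) (c : R) : Prop :=
  exists d, c < d /\ forall T, exists t, T <= t /\ d <= f t.

Definition tau_min (m : nat) (tau : nat -> R -> R) (t : R) : R :=
  minR (pred m) (fun i => tau i t).

(* x is a solution of (E) on [T0, +oo):  x continuous on [T0,oo),
   continuously differentiable on [tau_(-1)(T0), oo) where
   tau_(-1)(T0) = sup { s >= t0 : tau(s) <= T0 }, and satisfies (E) there. *)
Definition is_solution (t0 : R) (m : nat) (p tau : nat -> R -> R)
    (x : R -> R) : Prop :=
  exists T0 T1, t0 <= T0 /\
    is_lub (fun s => t0 <= s /\ tau_min m tau s <= T0) T1 /\
    cont_from T0 x /\
    exists x' : R -> R, cont_from T1 x' /\
      forall t, T1 <= t ->
        deriv_from T1 x t (x' t) /\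
        x' t + sumR m (fun i => p i t * x (tau i t)) = 0.

Definition oscillatory (x : R -> R) : Prop :=
  forall T, exists t, T <= t /\ x t = 0.

Definition I_ij (m : nat) (p tau sigma : nat -> R -> R) (i j : nat) (t : R) : R :=
  Rint (fun s =>
    p i s * exp (Rint (fun xi =>
      sumR m (fun k => p k xi *
        exp (Rint (fun u => sumR m (fun l => p l u)) (tau k xi) xi)))
      (tau i s) (sigma i t)))
    (sigma j t) t.

(* Main.v *)
Require Import Defs.
From Stdlib Require Import Reals Lra.
From mathcomp Require all_boot all_order all_algebra Rstruct.
Open Scope R_scope.

Module AMGM.
Import all_boot all_order all_algebra Rstruct.
Import Order.TTheory GRing.Theory Num.Theory.

Lemma sumR_big n (a : nat -> R) : sumR n a = (\sum_(i < n) a i)%R.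
Proof. elim: n => [|n IH]; first by rewrite big_ord0. by rewrite big_ord_recr /= IH. Qed.
Lemma prodR_big n (a : nat -> R) : prodR n a = (\prod_(i < n) a i)%R.
Proof. elim: n => [|n IH]; first by rewrite big_ord0. by rewrite big_ord_recr /= IH. Qed.

Lemma amgm (n : nat) (a : nat -> R) :
  (forall i, lt i n -> 0 <= a i) ->
  INR n ^ n * prodR n a <= (sumR n a) ^ n.
Proof.
move=> H.
rewrite sumR_big prodR_big !RpowE INRE.
have Hp : {in predT, forall i : 'I_n, (0 <= a i *+ #|(predT : {pred 'I_n})|)%R}.
  by move=> i _; rewrite mulrn_wge0 //; apply/RleP; apply: H; apply/ssrnat.ltP.
have [h _] := @leif_AGM_scaled _ 'I_n predT (fun i => a i) Hp.
move: h; rewrite card_ord => h.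
apply/RleP.
rewrite prodrMn_const card_ord -mulr_natl natrX in h.
exact: h.
Qed.
End AMGM.
From Stdlib Require Import Lia Classical ClassicalEpsilon Ranalysis5.
From Coquelicot Require Import Coquelicot.

Lemma sumR_le n a b : (forall i, (i < n)%nat -> a i <= b i) -> sumR n a <= sumR n b.
Proof. induction n; simpl; intros H. lra. apply Rplus_le_compat; [apply IHn; intros; apply H; lia| apply H; lia]. Qed.
Lemma sumR_mult_r n a c : sumR n (fun i => a i * c) = sumR n a * c.
Proof. induction n; simpl. ring. rewrite IHn; ring. Qed.
Lemma sumR_opp n a : sumR n (fun i => - a i) = - sumR n a.
Proof. induction n; simpl. ring. rewrite IHn; ring. Qed.
Lemma sumR_ext n a b : (forall i, (i < n)%nat -> a i = b i) -> sumR n a = sumR n b.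
Proof. induction n; simpl; intros H. auto. rewrite IHn, H; auto; intros; apply H; lia. Qed.
Lemma sumR_nonneg n a : (forall i, (i < n)%nat -> 0 <= a i) -> 0 <= sumR n a.
Proof. intros H. apply Rle_trans with (sumR n (fun _ => 0)). clear H; induction n; simpl; lra. apply sumR_le; auto. Qed.
Lemma prodR_nonneg n a : (forall i, (i < n)%nat -> 0 <= a i) -> 0 <= prodR n a.
Proof. induction n; simpl; intros H. lra. apply Rmult_le_pos; [apply IHn; intros; apply H; lia| apply H; lia]. Qed.
Lemma prodR_pos n a : (forall i, (i < n)%nat -> 0 < a i) -> 0 < prodR n a.
Proof. induction n; simpl; intros H. lra. apply Rmult_lt_0_compat; [apply IHn; intros; apply H; lia| apply H; lia]. Qed.
Lemma prodR_le n a b : (forall i, (i < n)%nat -> 0 <= a i <= b i) -> prodR n a <= prodR n b.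
Proof. induction n; simpl; intros H. lra.
  apply Rmult_le_compat. apply prodR_nonneg; intros; apply H; lia. apply H; lia.
  apply IHn; intros; apply H; lia. apply H; lia. Qed.
Lemma prodR_mult n a b : prodR n (fun i => a i * b i) = prodR n a * prodR n b.
Proof. induction n; simpl. ring. rewrite IHn; ring. Qed.
Lemma prodR_pow n a k : prodR n (fun i => a i ^ k) = (prodR n a) ^ k.
Proof. induction n; simpl. rewrite pow1; auto. rewrite IHn, Rpow_mult_distr; ring. Qed.
Lemma prodR_const n c : prodR n (fun _ => c) = c ^ n.
Proof. induction n; simpl. auto. rewrite IHn; ring. Qed.
Lemma prodR_ext n a b : (forall i, (i < n)%nat -> a i = b i) -> prodR n a = prodR n b.
Proof. induction n; simpl; intros H. auto. rewrite IHn, H; auto; intros; apply H; lia. Qed.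

Lemma rootR_pow m P : (1 <= m)%nat -> 0 <= P -> 0 <= rootR m P /\ rootR m P ^ m = P.
Proof.
  intros Hm HP. unfold rootR. destruct (Rle_dec P 0).
  - split. lra. assert (P = 0) by lra. subst. apply pow_i; lia.
  - split. unfold Rpower. left; apply exp_pos.
    rewrite <- Rpower_pow by (unfold Rpower; apply exp_pos).
    rewrite Rpower_mult. rewrite Rinv_l. apply Rpower_1; lra.
    apply not_0_INR; lia.
Qed.

Lemma pow_le1 z m : (1 <= m)%nat -> 0 <= z -> z ^ m <= 1 -> z <= 1.
Proof.
  intros Hm Hz H. destruct (Rle_lt_dec z 1) as [h|h]; auto.
  exfalso. assert (1 < z ^ m). { destruct m. lia. apply Rlt_pow_R1; auto; lia. } lra.
Qed.

Lemma algebra (m : nat) (Y : nat -> R) (I : nat -> nat -> R) :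
  (1 <= m)%nat ->
  (forall i, (i < m)%nat -> 0 < Y i) ->
  (forall i j, (i < m)%nat -> (j < m)%nat -> 0 <= I i j) ->
  (forall j, (j < m)%nat -> sumR m (fun i => Y i * I i j) <= Y j) ->
  prodR m (fun j => rootR m (prodR m (fun i => I i j))) <= / (INR m ^ m).
Proof.
  intros Hm HY HI Hs.
  set (PY := prodR m Y).
  assert (HPY : 0 < PY) by (apply prodR_pos; auto).
  set (P := fun j => prodR m (fun i => I i j)).
  assert (HP : forall j, (j < m)%nat -> 0 <= P j) by (intros; apply prodR_nonneg; auto).
  assert (Hmm : 0 < INR m ^ m) by (apply pow_lt; apply lt_0_INR; lia).
  assert (Hj : forall j, (j < m)%nat -> 0 <= INR m ^ m * PY * P j <= Y j ^ m).
  { intros j Hj. split. apply Rmult_le_pos; [apply Rmult_le_pos|]; try lra; auto.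
    assert (Ha : forall i, (i < m)%nat -> 0 <= Y i * I i j).
    { intros i Hi. apply Rmult_le_pos; [left; apply HY; exact Hi|apply HI; auto]. }
    apply Rle_trans with (sumR m (fun i => Y i * I i j) ^ m).
    2:{ apply pow_incr. split. apply sumR_nonneg. exact Ha. apply Hs; auto. }
    eapply Rle_trans.
    2:{ apply AMGM.amgm. exact Ha. }
    unfold PY, P. rewrite prodR_mult. lra. }
  assert (Hprod : prodR m (fun j => INR m ^ m * PY * P j) <= prodR m (fun j => Y j ^ m)).
  { apply prodR_le; auto. }
  rewrite prodR_mult, prodR_mult, prodR_const, prodR_const, prodR_pow in Hprod. fold PY in Hprod.
  set (r := prodR m (fun j => rootR m (P j))).
  assert (Hr : 0 <= r) by (apply prodR_nonneg; intros; apply rootR_pow; auto).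
  assert (Hr2 : r ^ m = prodR m P).
  { unfold r. rewrite <- prodR_pow. apply prodR_ext. intros; apply rootR_pow; auto. }
  assert (H1 : (INR m ^ m * r) ^ m <= 1).
  { rewrite Rpow_mult_distr, Hr2.
    assert (0 < PY ^ m) by (apply pow_lt; auto).
    apply Rmult_le_reg_r with (PY ^ m); auto.
    rewrite Rmult_1_l. rewrite <- pow_mult. rewrite <- pow_mult in Hprod. replace (INR m ^ (m * m) * prodR m P * PY ^ m) with (INR m ^ (m * m) * PY ^ m * prodR m P) by ring; exact Hprod. }
  apply pow_le1 in H1; auto. 2: apply Rmult_le_pos; lra.
  change (r <= / (INR m ^ m)). apply Rmult_le_reg_l with (INR m ^ m); auto. rewrite Rinv_r; lra.
Qed.

Lemma Rint_RInt f a b : ex_RInt f a b -> Rint f a b = RInt f a b.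
Proof.
  intros H. unfold Rint.
  case excluded_middle_informative; intros e.
  - symmetry; apply RInt_Reals.
  - exfalso; apply e. exists (ex_RInt_Reals_0 _ _ _ H); exact I.
Qed.

Lemma Rint_0 f a b : ~ ex_RInt f a b -> Rint f a b = 0.
Proof.
  intros H. unfold Rint.
  case excluded_middle_informative; intros e; auto.
  exfalso; apply H. destruct e as [pr _]. now apply ex_RInt_Reals_1.
Qed.

Lemma sum_RInt (n : nat) (c : nat -> R) (g : nat -> R -> R) a b :
  (forall i, (i < n)%nat -> ex_RInt (g i) a b) ->
  ex_RInt (fun x => sumR n (fun i => c i * g i x)) a b /\
  RInt (fun x => sumR n (fun i => c i * g i x)) a b = sumR n (fun i => c i * RInt (g i) a b).
Proof.
  induction n as [|n IH]; intros Hg; simpl.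
  - split. apply (ex_RInt_const a b (0:R)).
    rewrite RInt_const. unfold scal; simpl; unfold mult; simpl; ring.
  - destruct IH as [IH1 IH2]. intros; apply Hg; lia.
    assert (Hn : ex_RInt (g n) a b) by (apply Hg; lia).
    assert (E1 : ex_RInt (fun x => c n * g n x) a b) by (apply (ex_RInt_scal (g n) a b (c n) Hn)).
    split.
    + apply (ex_RInt_plus _ _ a b IH1 E1).
    + etransitivity; [apply (RInt_plus _ _ a b IH1 E1)|].
      rewrite IH2.
      etransitivity; [apply f_equal, (RInt_scal (g n) a b (c n) Hn)|]. reflexivity.
Qed.

Lemma key (n : nat) (c : nat -> R) (f : nat -> R -> R) (G H : R -> R) a b :
  a <= b ->
  (forall x, a <= x <= b -> is_derive G x (H x)) ->
  (forall x, a <= x <= b -> continuous H x) ->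
  (forall i, (i < n)%nat -> 0 <= c i) ->
  (forall i, (i < n)%nat -> forall x, a < x < b -> 0 <= f i x) ->
  (forall x, a < x < b -> sumR n (fun i => c i * f i x) <= H x) ->
  sumR n (fun i => c i * Rint (f i) a b) <= G b - G a.
Proof.
  intros Hab HG HH Hc Hf Hs.
  set (g := fun i x => if excluded_middle_informative (ex_RInt (f i) a b) then f i x else 0).
  assert (Eg : forall i, ex_RInt (g i) a b /\ Rint (f i) a b = RInt (g i) a b).
  { intros i. unfold g. destruct (excluded_middle_informative (ex_RInt (f i) a b)) as [e|ne].
    - split; [exact e| apply Rint_RInt; exact e].
    - split. apply (ex_RInt_const a b (0:R)).
      rewrite Rint_0 by exact ne. rewrite RInt_const. unfold scal; simpl; unfold mult; simpl; ring. }
  assert (Hsum : sumR n (fun i => c i * Rint (f i) a b) = sumR n (fun i => c i * RInt (g i) a b)).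
  { clear -Eg. induction n; simpl; auto. rewrite IHn. f_equal. f_equal. apply Eg. }
  rewrite Hsum.
  destruct (sum_RInt n c g a b (fun i _ => proj1 (Eg i))) as [E1 E2].
  rewrite <- E2.
  assert (HR : is_RInt H a b (minus (G b) (G a))).
  { apply (is_RInt_derive G H a b).
    - intros x Hx. rewrite Rmin_left, Rmax_right in Hx by lra. auto.
    - intros x Hx. rewrite Rmin_left, Rmax_right in Hx by lra. auto. }
  replace (G b - G a) with (RInt H a b).
  2:{ apply is_RInt_unique. exact HR. }
  apply RInt_le; auto.
  - exists (minus (G b) (G a)); exact HR.
  - intros x Hx. eapply Rle_trans; [|apply Hs; auto].
    assert (forall k, (k <= n)%nat -> sumR k (fun i => c i * g i x) <= sumR k (fun i => c i * f i x)).
    { induction k; simpl; intros Hk. lra.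
      apply Rplus_le_compat. apply IHk; lia.
      apply Rmult_le_compat_l. apply Hc; lia.
      unfold g. destruct (excluded_middle_informative _). lra. apply Hf; auto; lia. }
    apply H0; lia.
Qed.

Lemma exp_mono x y : x <= y -> exp x <= exp y.
Proof. intros [h|h]. left; apply exp_increasing; auto. subst; lra. Qed.

Lemma deriv_is T1 y t l : T1 < t -> deriv_from T1 y t l -> is_derive y t l.
Proof.
  intros Ht H. apply is_derive_Reals. intros eps He. destruct (H eps He) as [d [Hd Hd']].
  assert (Hp : 0 < Rmin d (t - T1)) by (apply Rmin_pos; lra).
  exists (mkposreal _ Hp). simpl. intros h Hh Hh'.
  apply Hd'; auto.
  - eapply Rlt_le_trans; [exact Hh'| apply Rmin_l].
  - assert (Rabs h < t - T1) by (eapply Rlt_le_trans; [exact Hh'| apply Rmin_r]).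
    apply Rabs_def2 in H0. lra.
Qed.

Lemma cont_is T1 f t : T1 < t -> cont_from T1 f -> continuous f t.
Proof.
  intros Ht H. apply continuity_pt_filterlim.
  intros eps He. destruct (H t (Rlt_le _ _ Ht) eps He) as [d [Hd Hd']].
  exists (Rmin d (t - T1)). split. apply Rmin_pos; lra.
  intros x [_ Hx]. unfold R_dist in *. simpl in *. unfold R_dist in *.
  assert (Rabs (x - t) < d) by (eapply Rlt_le_trans; [exact Hx| apply Rmin_l]).
  assert (Rabs (x - t) < t - T1) by (eapply Rlt_le_trans; [exact Hx| apply Rmin_r]).
  apply Hd'; auto. apply Rabs_def2 in H1. lra.
Qed.

Lemma Rint_nonneg f a b : a <= b -> (forall x, a < x < b -> 0 <= f x) -> 0 <= Rint f a b.
Proof.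
  intros Hab Hf. destruct (classic (ex_RInt f a b)) as [e|ne].
  - rewrite Rint_RInt by exact e. apply RInt_ge_0; auto.
  - rewrite Rint_0 by exact ne. lra.
Qed.

Lemma thr m (tau : nat -> R -> R) : (forall i, (i < m)%nat -> tends_to_infty (tau i)) ->
  forall M, exists A, M <= A /\ forall t, A <= t -> forall i, (i < m)%nat -> M <= tau i t.
Proof.
  induction m; intros H M.
  - exists M. split. lra. intros; lia.
  - destruct (IHm (fun i Hi => H i (Nat.lt_lt_succ_r _ _ Hi)) M) as [A [HA HA']].
    destruct (H m (Nat.lt_succ_diag_r m) M) as [B HB].
    exists (Rmax A B). split. eapply Rle_trans; [exact HA| apply Rmax_l].
    intros t Ht i Hi. destruct (Nat.eq_dec i m) as [->|ne].
    + apply HB. eapply Rle_trans; [apply Rmax_r| exact Ht].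
    + apply HA'. eapply Rle_trans; [apply Rmax_l| exact Ht]. lia.
Qed.

Lemma no_pos (m : nat) (t0 : R) (p tau sigma : nat -> R -> R) :
  (1 <= m)%nat ->
  (forall i, (i < m)%nat ->
     cont_from t0 (p i) /\ cont_from t0 (tau i) /\
     (forall t, t0 <= t -> 0 <= p i t /\ 0 <= tau i t /\ tau i t <= t) /\
     tends_to_infty (tau i)) ->
  (forall i, (i < m)%nat ->
     cont_from t0 (sigma i) /\ nondecr_from t0 (sigma i) /\
     (forall t, t0 <= t -> tau i t <= sigma i t /\ sigma i t <= t)) ->
  limsup_gt (fun t => prodR m (fun j =>
               rootR m (prodR m (fun i => I_ij m p tau sigma i j t))))
            (/ (INR m ^ m)) ->
  forall (y y' : R -> R) (T1 T : R), t0 <= T1 ->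
  cont_from T1 y' ->
  (forall t, T1 <= t -> deriv_from T1 y t (y' t) /\
        y' t + sumR m (fun i => p i t * y (tau i t)) = 0) ->
  (forall t, T <= t -> 0 < y t) -> False.
Proof.
  intros Hm Hp Hsg Hl y y' T1 T Ht0 Hc Hy HT.
  assert (Hpn : forall i t, (i < m)%nat -> t0 <= t -> 0 <= p i t) by (intros; apply Hp; auto).
  assert (Htl : forall i t, (i < m)%nat -> t0 <= t -> tau i t <= t) by (intros; apply Hp; auto).
  assert (Hts : forall i t, (i < m)%nat -> t0 <= t -> tau i t <= sigma i t) by (intros; apply Hsg; auto).
  assert (Hsl : forall i t, (i < m)%nat -> t0 <= t -> sigma i t <= t) by (intros; apply Hsg; auto).
  assert (Hsn : forall i s t, (i < m)%nat -> t0 <= s -> s <= t -> sigma i s <= sigma i t) by (intros; apply Hsg; auto).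
  assert (Hthr := thr m tau (fun i Hi => proj2 (proj2 (proj2 (Hp i Hi))))).
  set (B0 := Rmax T (T1 + 1)).
  assert (HB0 : T <= B0 /\ T1 + 1 <= B0) by (split; [apply Rmax_l|apply Rmax_r]).
  destruct (Hthr B0) as [A1 [HA1 HA1']].
  destruct (Hthr A1) as [A2 [HA2 HA2']].
  destruct (Hthr A2) as [A3 [HA3 HA3']].
  destruct (Hthr A3) as [A4 [HA4 HA4']].
  destruct (Hthr A4) as [A5 [HA5 HA5']].
  assert (Dy : forall u, B0 <= u -> is_derive y u (y' u)).
  { intros u Hu. apply deriv_is with T1. lra. apply Hy. lra. }
  assert (Cy' : forall u, B0 <= u -> continuous y' u).
  { intros u Hu. apply cont_is with T1; auto. lra. }
  assert (Cy : forall u, B0 <= u -> continuous y u).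
  { intros u Hu. apply (@ex_derive_continuous R_AbsRing R_NormedModule y u). exists (y' u). auto. }
  assert (Eq : forall u, B0 <= u -> y' u = - sumR m (fun i => p i u * y (tau i u))).
  { intros u Hu. assert (h := proj2 (Hy u ltac:(lra))). lra. }
  assert (Ypos : forall u, B0 <= u -> 0 < y u) by (intros; apply HT; lra).
  assert (F1 : forall u, A1 <= u -> y' u <= 0).
  { intros u Hu. rewrite Eq by lra.
    assert (0 <= sumR m (fun i => p i u * y (tau i u))); [|lra].
    apply sumR_nonneg. intros i Hi. apply Rmult_le_pos. apply Hpn; auto; lra.
    left; apply Ypos. apply HA1'; auto. }
  assert (F2 : forall a b, A1 <= a -> a <= b -> y b <= y a).
  { intros a b Ha Hab.
    pose proof (key 0 (fun _ => 0) (fun _ _ => 0) (fun u => - y u) (fun u => - y' u) a b Hab) as K.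
    simpl in K. assert (0 <= - y b - - y a); [|lra]. apply K.
    - intros x Hx. apply (is_derive_opp y x (y' x)). apply Dy; lra.
    - intros x Hx. apply (continuous_opp y' x). apply Cy'; lra.
    - intros; lia.
    - intros; lia.
    - intros x Hx. assert (y' x <= 0) by (apply F1; lra). lra. }
  assert (F3 : forall a b (g : R -> R), A1 <= a -> a <= b ->
             (forall x, a < x < b -> 0 <= g x) ->
             (forall x, a < x < b -> g x <= - (y' x / y x)) ->
             Rint g a b <= ln (y a) - ln (y b)).
  { intros a b g Ha Hab Hg1 Hg2.
    pose proof (key 1 (fun _ => 1) (fun _ => g) (fun u => - ln (y u)) (fun u => - (y' u / y u)) a b Hab) as K.
    simpl in K. assert (0 + 1 * Rint g a b <= - ln (y b) - - ln (y a)); [|lra]. apply K.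
    - intros x Hx.
      assert (Hd : is_derive (fun u => ln (y u)) x (y' x * / y x)).
      { apply (is_derive_comp ln y x (/ y x) (y' x)).
        apply is_derive_ln. apply Ypos; lra. apply Dy; lra. }
      apply (is_derive_opp (fun u => ln (y u)) x _ Hd).
    - intros x Hx. apply (continuous_opp (fun u => y' u / y u) x).
      apply (continuous_mult y' (fun u => / y u) x). apply Cy'; lra.
      apply continuous_Rinv_comp. apply Cy; lra. assert (0 < y x) by (apply Ypos; lra). lra.
    - intros; lra.
    - intros i Hi x Hx. apply Hg1; auto.
    - intros x Hx. assert (g x <= - (y' x / y x)) by auto. lra. }
  set (S := fun u => sumR m (fun l => p l u)).
  assert (F4 : forall x, A2 <= x -> S x <= - (y' x / y x)).
  { intros x Hx. assert (Hyx : 0 < y x) by (apply Ypos; lra).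
    replace (- (y' x / y x)) with (sumR m (fun i => p i x * y (tau i x)) * / y x).
    2:{ rewrite Eq by lra. field. lra. }
    apply Rmult_le_reg_r with (y x); auto. rewrite Rmult_assoc, Rinv_l, Rmult_1_r by lra.
    unfold S. rewrite <- sumR_mult_r. apply sumR_le. intros i Hi.
    apply Rmult_le_compat_l. apply Hpn; auto; lra.
    apply F2. apply HA2'; auto. apply Htl; auto; lra. }
  assert (Snn : forall x, t0 <= x -> 0 <= S x).
  { intros x Hx. apply sumR_nonneg. intros; apply Hpn; auto. }
  assert (F5 : forall xi k, A3 <= xi -> (k < m)%nat ->
            exp (Rint S (tau k xi) xi) <= y (tau k xi) / y xi).
  { intros xi k Hxi Hk.
    assert (Ha : A2 <= tau k xi) by (apply HA3'; auto).
    assert (Hab : tau k xi <= xi) by (apply Htl; auto; lra).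
    assert (H3 : Rint S (tau k xi) xi <= ln (y (tau k xi)) - ln (y xi)).
    { apply F3; auto. lra. intros x Hx; apply Snn; lra. intros x Hx; apply F4; lra. }
    apply exp_mono in H3. eapply Rle_trans; [exact H3|].
    unfold Rminus. rewrite exp_plus, exp_Ropp, !exp_ln. right; reflexivity.
    apply Ypos; lra. apply Ypos; lra. }
  set (Q := fun xi => sumR m (fun k => p k xi * exp (Rint S (tau k xi) xi))).
  assert (F6 : forall xi, A3 <= xi -> Q xi <= - (y' xi / y xi)).
  { intros x Hx. assert (Hyx : 0 < y x) by (apply Ypos; lra).
    replace (- (y' x / y x)) with (sumR m (fun i => p i x * y (tau i x)) * / y x).
    2:{ rewrite Eq by lra. field. lra. }
    unfold Q. rewrite <- sumR_mult_r. apply sumR_le. intros i Hi.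
    rewrite Rmult_assoc. apply Rmult_le_compat_l. apply Hpn; auto; lra.
    apply F5; auto. }
  assert (Qnn : forall x, t0 <= x -> 0 <= Q x).
  { intros x Hx. apply sumR_nonneg. intros; apply Rmult_le_pos. apply Hpn; auto. left; apply exp_pos. }
  assert (F8 : forall t j, A5 <= t -> (j < m)%nat ->
      sumR m (fun i => y (sigma i t) * I_ij m p tau sigma i j t) <= y (sigma j t) - y t).
  { intros t j Ht Hj.
    assert (Ha : A4 <= sigma j t).
    { apply Rle_trans with (tau j t). apply HA5'; auto. apply Hts; auto; lra. }
    assert (Hab : sigma j t <= t) by (apply Hsl; auto; lra).
    pose proof (key m (fun i => y (sigma i t)) (fun i s => p i s * exp (Rint Q (tau i s) (sigma i t)))
                  (fun u => - y u) (fun u => - y' u) (sigma j t) t Hab) as K.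
    assert (E : sumR m (fun i => y (sigma i t) * I_ij m p tau sigma i j t) =
                sumR m (fun i => y (sigma i t) * Rint (fun s => p i s * exp (Rint Q (tau i s) (sigma i t))) (sigma j t) t)).
    { apply sumR_ext. intros i Hi. reflexivity. }
    rewrite E. assert (sumR m (fun i => y (sigma i t) * Rint (fun s => p i s * exp (Rint Q (tau i s) (sigma i t))) (sigma j t) t) <= - y t - - y (sigma j t)); [|lra].
    apply K.
    - intros x Hx. apply (is_derive_opp y x (y' x)). apply Dy; lra.
    - intros x Hx. apply (continuous_opp y' x). apply Cy'; lra.
    - intros i Hi. left; apply Ypos. apply Rle_trans with (tau i t). apply Rle_trans with A4; [lra|]. apply HA5'; auto. apply Hts; auto; lra.
    - intros i Hi x Hx. apply Rmult_le_pos. apply Hpn; auto; lra. left; apply exp_pos.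
    - intros s Hs. rewrite Eq by lra. rewrite Ropp_involutive. apply sumR_le. intros i Hi.
      assert (Hta : A3 <= tau i s) by (apply HA4'; auto; lra).
      assert (Hts2 : tau i s <= sigma i t).
      { apply Rle_trans with (sigma i s). apply Hts; auto; lra. apply Hsn; auto; lra. }
      assert (Hsi : B0 <= sigma i t).
      { apply Rle_trans with (tau i t). apply Rle_trans with A4; [lra|]. apply HA5'; auto. apply Hts; auto; lra. }
      assert (H3 : Rint Q (tau i s) (sigma i t) <= ln (y (tau i s)) - ln (y (sigma i t))).
      { apply F3; auto. lra. intros x Hx; apply Qnn; lra. intros x Hx; apply F6; lra. }
      apply exp_mono in H3. unfold Rminus in H3. rewrite exp_plus, exp_Ropp, !exp_ln in H3.
      2: apply Ypos; lra. 2: apply Ypos; lra.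
      assert (0 < y (sigma i t)) by (apply Ypos; lra).
      assert (0 <= p i s) by (apply Hpn; auto; lra).
      replace (y (sigma i t) * (p i s * exp (Rint Q (tau i s) (sigma i t))))
        with (p i s * (y (sigma i t) * exp (Rint Q (tau i s) (sigma i t)))) by ring.
      apply Rmult_le_compat_l; auto.
      apply Rmult_le_compat_l with (r := y (sigma i t)) in H3; [|lra].
      replace (y (sigma i t) * (y (tau i s) * / y (sigma i t))) with (y (tau i s)) in H3 by (field; lra).
      exact H3. }
  destruct Hl as [d [Hd Hd']].
  destruct (Hd' A5) as [t [Ht Hft]].
  assert (Hal : prodR m (fun j => rootR m (prodR m (fun i => I_ij m p tau sigma i j t))) <= / (INR m ^ m)).
  { apply (algebra m (fun i => y (sigma i t)) (fun i j => I_ij m p tau sigma i j t)); auto.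
    - intros i Hi. apply Ypos. apply Rle_trans with (tau i t). apply Rle_trans with A4; [lra|]. apply HA5'; auto. apply Hts; auto; lra.
    - intros i j Hi Hj. apply Rint_nonneg. apply Hsl; auto; lra.
      intros s Hs. apply Rmult_le_pos. apply Hpn; auto.
      assert (A4 <= sigma j t). { apply Rle_trans with (tau j t). apply HA5'; auto. apply Hts; auto; lra. } lra.
      left; apply exp_pos.
    - intros j Hj. assert (0 < y t) by (apply Ypos; lra). specialize (F8 t j Ht Hj). lra. }
  lra.
Qed.

Lemma minR_le0 n f : minR n f <= f O.
Proof. induction n; simpl. lra. eapply Rle_trans; [apply Rmin_l| exact IHn]. Qed.

Lemma sign_const (f : R -> R) c :
  (forall a, c <= a -> continuity_pt f a) -> 0 < f c ->
  (forall t, c <= t -> f t <> 0) -> forall t, c <= t -> 0 < f t.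
Proof.
  intros Hc Hfc Hn t Ht. destruct (Rlt_le_dec 0 (f t)) as [h|h]; auto. exfalso.
  assert (h' : f t < 0) by (destruct h; auto; exfalso; apply (Hn t); auto).
  assert (Hct : c < t) by (destruct Ht as [Ht|Ht]; auto; subst; lra).
  destruct (Ranalysis5.IVT_interv (fun u => - f u) c t) as [z [Hz Hz']]; auto.
  - intros a Ha. apply continuity_pt_opp. apply Hc; lra.
  - lra.
  - lra.
  - apply (Hn z). lra. lra.
Qed.

Lemma deriv_from_opp T1 y t l : deriv_from T1 y t l -> deriv_from T1 (fun u => - y u) t (- l).
Proof.
  intros H eps He. destruct (H eps He) as [d [Hd Hd']]. exists d. split; auto.
  intros h Hh Hh' Ht. replace ((- y (t + h) - - y t) / h - - l) with (- ((y (t + h) - y t) / h - l)) by (field; auto).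
  rewrite Rabs_Ropp. auto.
Qed.

Lemma cont_from_opp T1 f : cont_from T1 f -> cont_from T1 (fun u => - f u).
Proof.
  intros H t Ht eps He. destruct (H t Ht eps He) as [d [Hd Hd']]. exists d. split; auto.
  intros s Hs Hs'. replace (- f s - - f t) with (- (f s - f t)) by ring. rewrite Rabs_Ropp. auto.
Qed.

Theorem theorem3p1 (m : nat) (t0 : R) (p tau sigma : nat -> R -> R) :
  (1 <= m)%nat ->
  (forall i, (i < m)%nat ->
     cont_from t0 (p i) /\ cont_from t0 (tau i) /\
     (forall t, t0 <= t -> 0 <= p i t /\ 0 <= tau i t /\ tau i t <= t) /\
     tends_to_infty (tau i)) ->
  (forall i, (i < m)%nat ->
     cont_from t0 (sigma i) /\ nondecr_from t0 (sigma i) /\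
     (forall t, t0 <= t -> tau i t <= sigma i t /\ sigma i t <= t)) ->
  limsup_gt (fun t => prodR m (fun j =>
               rootR m (prodR m (fun i => I_ij m p tau sigma i j t))))
            (/ (INR m ^ m)) ->
  forall x : R -> R, is_solution t0 m p tau x -> oscillatory x.
Proof.
  intros Hm Hp Hs Hl x [T0 [T1 [HT0 [Hlub [Hcx [x' [Hcx' Hx]]]]]]].
  assert (Ht0 : t0 <= T1).
  { apply (proj1 Hlub). split. lra. unfold tau_min.
    eapply Rle_trans. apply minR_le0. simpl.
    assert (tau 0%nat t0 <= t0) by (apply Hp; [lia|lra]). lra. }
  intros TT. apply NNPP. intro Hno.
  assert (Hnz : forall t, TT <= t -> x t <> 0).
  { intros t Ht Hx0. apply Hno. exists t. auto. }
  set (c := Rmax TT (T1 + 1)).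
  assert (Hc1 : TT <= c /\ T1 + 1 <= c) by (split; [apply Rmax_l|apply Rmax_r]).
  assert (Cx : forall a, c <= a -> continuity_pt x a).
  { intros a Ha. apply continuity_pt_filterlim.
    apply (@ex_derive_continuous R_AbsRing R_NormedModule x a). exists (x' a).
    apply deriv_is with T1. lra. apply Hx. lra. }
  assert (Hnc : forall t, c <= t -> x t <> 0) by (intros; apply Hnz; lra).
  destruct (Rlt_le_dec 0 (x c)) as [Hpos|Hneg].
  - apply (no_pos m t0 p tau sigma Hm Hp Hs Hl x x' T1 c Ht0 Hcx').
    + intros t Ht. apply Hx; auto.
    + apply sign_const; auto.
  - assert (Hneg' : x c < 0) by (destruct Hneg; auto; exfalso; apply (Hnc c); [lra|auto]).
    apply (no_pos m t0 p tau sigma Hm Hp Hs Hl (fun u => - x u) (fun u => - x' u) T1 c Ht0).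
    + apply cont_from_opp; auto.
    + intros t Ht. destruct (Hx t Ht) as [H1 H2]. split.
      * apply deriv_from_opp; auto.
      * rewrite (sumR_ext m _ (fun i => - (p i t * x (tau i t)))) by (intros; ring).
        rewrite sumR_opp. lra.
    + apply sign_const.
      * intros a Ha. apply continuity_pt_opp. auto.
      * lra.
      * intros t Ht Ht'. apply (Hnc t Ht). lra.
Qed.
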